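(* Let $X$ be a finite group with a normal subgroup $N$ and a complement $G$ to $N$ in $X$ (so $X=N{:}G$), and let $Y\leq X$ be core-free such that the transitive permutation group $X$ acting on the right cosets of $Y$ is elusive. Identify $G$ with $X/N$ via the quotient map, and let $H$ be the subgroup of $G$ corresponding to $YN/N$. Suppose $H$ is core-free in $G$. Then $G$, acting transitively on the right cosets of $H$, is elusive.
   Context: A derangement is a permutation with no fixed points. A transitive permutation group is elusive if it contains no derangements of prime order. *)

(* Defs.v *)
From mathcomp Require Import all_boot all_fingroup all_solvable.
Set Implicit Arguments. Unset Strict Implicit. Unset Printing Implicit Defensive.
Local Open Scope group_scope.

Definition coset_kernel (gT : finGroupType) (X Y : {group gT}) : {group gT} :=
  'C_X(rcosets Y X | 'Rs)%G.

(* Order of the permutation of rcosets Y X induced by x. *)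
Definition perm_order (gT : finGroupType) (X Y : {group gT}) (x : gT) : nat :=
  #[coset (coset_kernel X Y) x].

Definition derangement (gT : finGroupType) (X Y : {group gT}) (x : gT) : bool :=
  'Fix_(rcosets Y X | 'Rs)[x] == set0.

Definition elusive (gT : finGroupType) (X Y : {group gT}) : Prop :=
  [transitive X, on rcosets Y X | 'Rs] /\
  forall x, x \in X -> prime (perm_order X Y x) -> ~~ derangement X Y x.

Definition core_free (gT : finGroupType) (X Y : {group gT}) : bool :=
  gcore Y X == 1.

(* Main.v *)
Require Import Defs.
From mathcomp Require Import all_boot all_fingroup all_solvable.
Local Open Scope group_scope.

Lemma perm_order_cf (gT : finGroupType) (X Y : {group gT}) x :
  core_free X Y -> perm_order X Y x = #[x].
Proof.
move/eqP=> cf; rewrite /perm_order.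
have -> : coset_kernel X Y = 1%G.
  apply/val_inj => /=; apply/eqP; rewrite eqEsubset sub1G andbT.
  by rewrite -cf -astabRs_rcosets subsetIr.
rewrite (order_injm (coset1_injm gT)) //. by rewrite /= norm1 inE.
Qed.

Theorem lemma5p4 (gT : finGroupType) (X N G Y : {group gT}) :
  N <| X -> N ><| G = X ->
  Y \subset X -> core_free X Y -> elusive X Y ->
  core_free G (G :&: (Y <*> N))%G ->
  elusive G (G :&: (Y <*> N))%G.
Proof.
move=> nNX defX sYX cfX [_ elX] cfG; split; first exact: transRs_rcosets.
move=> g Gg; rewrite perm_order_cf // => pg.
have sGX : G \subset X.
  by case/sdprodP: defX => _ <- _ _; apply: mulG_subr.
have Xg : g \in X by apply: (subsetP sGX).
have := elX g Xg; rewrite perm_order_cf // => /(_ pg).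
rewrite /derangement => /set0Pn [C]; rewrite inE => /andP [CX /afix1P /= CgC].
case/rcosetsP: CX => z Xz defC.
case/sdprodP: defX => _ defNG _ _.
move: Xz; rewrite -defNG => /mulsgP [n x Nn Gx defz].
apply/set0Pn; exists ((G :&: (Y <*> N))%G :* x); rewrite inE; apply/andP; split.
  by apply/rcosetsP; exists x.
apply/afix1P => /=; rewrite rcosetE -rcosetM.
move: CgC; rewrite defC rcosetE -rcosetM => /rcoset_eqP /rcosetP [y Yy zg].
have yE : y = g ^ z^-1.
  by rewrite conjgE invgK mulgA zg mulgK.
have aE : g ^ x^-1 = y ^ n by rewrite yE defz invMg conjgM conjgKV.
apply/rcoset_eqP/rcosetP; exists (g ^ x^-1).
  rewrite inE; apply/andP; split; first by rewrite groupJ ?groupV.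
  rewrite aE groupJ //.
    by apply: (subsetP (joing_subl Y N)).
  by apply: (subsetP (joing_subr Y N)).
by rewrite conjgE invgK mulgA mulgKV.
Qed.
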